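(* Let $\sigma$ be a simplex of dimension $n$ (i.e. $|\sigma|=n+1$) in a simplicial complex $K$ with vertex set $K_0$. Then the complex $\left(\bigcup_{v\in\sigma}K_{K_0\setminus\{v\}}\right)\cap\mathrm{St}(\sigma)$ has the homotopy type of the $n$-th suspension $\Sigma^n\,\mathrm{St}(\sigma,K_0\setminus\sigma)$ of the obstruction complex.
   Context: A simplicial complex is a collection of finite nonempty subsets of a fixed set closed under taking nonempty subsets; $K_0$ is the vertex set. For a set $B$, $K_B$ is the subcomplex of simplices contained in $B$. The star of $\sigma$ is $\mathrm{St}(\sigma):=\{\mu\in K\mid\sigma\cup\mu\in K\}$, and for a set $A$, $\mathrm{St}(\sigma,A):=\{\mu\subset A\mid 0<|\mu|<\infty,\ \mu\cup\sigma\in K\}=K_A\cap\mathrm{St}(\sigma)$, which may be empty. Suspension is unreduced, so that $\Sigma^n\emptyset\simeq S^{n-1}$ (with $S^{-1}=\emptyset$). Homotopy types are those of geometric realizations. *)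

(* Defs.v *)
From HB Require Import structures.
From mathcomp Require Import all_boot all_order all_algebra.
From mathcomp Require Import finmap.
From mathcomp Require Import all_classical all_reals all_analysis.
Set Implicit Arguments. Unset Strict Implicit. Unset Printing Implicit Defensive.
Import Order.TTheory GRing.Theory Num.Theory.
Import numFieldNormedType.Exports.
Local Open Scope classical_set_scope.
Local Open Scope ring_scope.
Local Open Scope fset_scope.

Definition simplicial_complex {V : choiceType} (K : set {fset V}) : Prop :=
  (forall s, K s -> s != fset0) /\
  (forall s t, K s -> t `<=` s -> t != fset0 -> K t).

Definition star {V : choiceType} (K : set {fset V}) (sigma : {fset V}) :
  set {fset V} := fun mu => K mu /\ K (mu `|` sigma).

(** [K_B] for B = K_0 \ {v} : simplices of K not containing v. *)
Definition full_sub_minus {V : choiceType} (K : set {fset V}) (v : V) :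
  set {fset V} := fun mu => K mu /\ v \notin mu.

Definition link_union_star {V : choiceType} (K : set {fset V})
  (sigma : {fset V}) : set {fset V} :=
  fun mu => (exists2 v, v \in sigma & full_sub_minus K v mu) /\ star K sigma mu.

(** The obstruction complex St(sigma, K_0 \ sigma) = K_{K_0\sigma} \cap St(sigma). *)
Definition obstruction {V : choiceType} (K : set {fset V}) (sigma : {fset V}) :
  set {fset V} := fun mu => (K mu /\ [disjoint mu & sigma]) /\ star K sigma mu.

(** Iterated (unreduced) simplicial suspension: the join
    L * S^0 * ... * S^0 (n copies of the two-point complex S^0),
    on vertex type V + ('I_n * bool). *)
Definition getl {V : choiceType} {n : nat} (y : V + ('I_n * bool)) : option V :=
  if y is inl v then Some v else None.

Definition ltrace {V : choiceType} {n : nat} (tau : {fset V + ('I_n * bool)}) :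
  {fset V} := [fset x | x in pmap getl (enum_fset tau)].

Definition suspension_n {V : choiceType} (n : nat) (L : set {fset V}) :
  set {fset V + ('I_n * bool)} :=
  fun tau => [/\ tau != fset0,
    ltrace tau = fset0 \/ L (ltrace tau) &
    forall i : 'I_n, ~ (inr (i, true) \in tau /\ inr (i, false) \in tau)].

Arguments suspension_n {V} n L _.

(** Geometric realization |K|: finitely supported barycentric coordinate
    functions whose support lies in a simplex of K, with the coherent (weak)
    topology: U is open iff U meets every closed simplex |s| in a set open
    for the Euclidean (max-norm) topology of |s|. *)
Definition is_point {R : realType} {V : choiceType} (K : set {fset V})
  (f : V -> R) : Prop :=
  exists s, [/\ K s, (forall v, v \notin s -> f v = 0),
                (forall v, 0 <= f v) & \sum_(v <- s) f v = 1].

Definition realization (R : realType) {V : choiceType} (K : set {fset V}) :=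
  {f : V -> R | is_point K f}.

HB.instance Definition _ (R : realType) (V : choiceType) (K : set {fset V}) :=
  gen_eqMixin (realization R K).
HB.instance Definition _ (R : realType) (V : choiceType) (K : set {fset V}) :=
  gen_choiceMixin (realization R K).

Definition supported_in {R : realType} {V : choiceType} {K : set {fset V}}
  (s : {fset V}) (p : realization R K) : Prop :=
  forall v, v \notin s -> proj1_sig p v = 0.

Definition realization_open {R : realType} {V : choiceType} (K : set {fset V})
  (U : set (realization R K)) : Prop :=
  forall s, K s -> forall p, U p -> supported_in s p ->
    exists2 e : R, 0 < e & forall q, supported_in s q ->
      (forall v, v \in s -> `|proj1_sig q v - proj1_sig p v| < e) -> U q.

Lemma realization_openT (R : realType) (V : choiceType) (K : set {fset V}) :
  @realization_open R V K setT.
Proof. by move=> s Ks p _ _; exists 1. Qed.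

Lemma realization_openI (R : realType) (V : choiceType) (K : set {fset V}) :
  setI_closed (@realization_open R V K).
Proof.
move=> A B oA oB s Ks p [Ap Bp] sp.
have [e1 e1p H1] := oA s Ks p Ap sp.
have [e2 e2p H2] := oB s Ks p Bp sp.
exists (Num.min e1 e2); first by rewrite lt_min e1p e2p.
move=> q sq d; split.
- by apply: H1 => // v vs; have := d v vs; rewrite lt_min => /andP[].
- by apply: H2 => // v vs; have := d v vs; rewrite lt_min => /andP[].
Qed.

Lemma realization_open_bigU (R : realType) (V : choiceType) (K : set {fset V})
  (I : Type) (f : I -> set (realization R K)) :
  (forall i, @realization_open R V K (f i)) -> @realization_open R V K (\bigcup_i f i).
Proof.
move=> ofi s Ks p [i _ fip] sp.
have [e ep H] := ofi i s Ks p fip sp.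
by exists e => // q sq d; exists i => //; apply: H.
Qed.

HB.instance Definition _ (R : realType) (V : choiceType) (K : set {fset V}) :=
  isOpenTopological.Build (realization R K) (@realization_openT R V K)
    (@realization_openI R V K) (@realization_open_bigU R V K).

Definition homotopic {R : realType} {X Y : topologicalType} (f g : X -> Y) : Prop :=
  exists H : (X * subspace [set t : R | 0 <= t <= 1])%type -> Y,
    [/\ continuous H, (forall x, H (x, 0) = f x) & (forall x, H (x, 1) = g x)].

Definition homotopy_equivalent (R : realType) (X Y : topologicalType) : Prop :=
  exists (f : X -> Y) (g : Y -> X),
    [/\ continuous f, continuous g,
        homotopic (R := R) (g \o f) idfun & homotopic (R := R) (f \o g) idfun].

(* Main.v *)
Require Import Defs.
From HB Require Import structures.
From mathcomp Require Import all_boot all_order all_algebra.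
From mathcomp Require Import finmap.
From mathcomp Require Import all_classical all_reals all_analysis.
Import numFieldNormedType.Exports.
Local Open Scope classical_set_scope.
Local Open Scope ring_scope.
Local Open Scope fset_scope.

From mathcomp Require Import ring lra.
Import Order.TTheory GRing.Theory Num.Theory.
Local Open Scope ring_scope.
Set Implicit Arguments. Unset Strict Implicit. Unset Printing Implicit Defensive.

Section Cts.
Variables (R : realType) (V : choiceType) (s : {fset V}).
Lemma mlt_l {x a b : R} : x < Num.min a b -> x < a.
Proof. by rewrite lt_min => /andP[]. Qed.
Lemma mlt_r {x a b : R} : x < Num.min a b -> x < b.
Proof. by rewrite lt_min => /andP[]. Qed.
Definition supp_in (q : V -> R) := forall v, v \notin s -> q v = 0.
Definition ctsAt (F : (V -> R) -> R) (p : V -> R) :=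
  forall e : R, 0 < e -> exists2 d : R, 0 < d & forall q, supp_in q ->
    (forall v, v \in s -> `|q v - p v| < d) -> `|F q - F p| < e.

Lemma ctsAt_const c p : ctsAt (fun _ => c) p.
Proof. by move=> e e0; exists 1 => // q _ _; rewrite subrr normr0. Qed.

Lemma ctsAt_coord v p : supp_in p -> ctsAt (fun q => q v) p.
Proof.
move=> sp e e0; exists e => // q sq H.
case: (boolP (v \in s)) => vs; first exact: H.
by rewrite sq // sp // subrr normr0.
Qed.

Lemma ctsAt_add F G p : ctsAt F p -> ctsAt G p -> ctsAt (fun q => F q + G q) p.
Proof.
move=> cF cG e e0.
have e2 : 0 < e / 2 by rewrite divr_gt0.
have [d1 d10 H1] := cF _ e2; have [d2 d20 H2] := cG _ e2.
exists (Num.min d1 d2); first by rewrite lt_min d10 d20.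
move=> q sq H.
have h1 := H1 q sq (fun v vs => mlt_l (H v vs)).
have h2 := H2 q sq (fun v vs => mlt_r (H v vs)).
have -> : F q + G q - (F p + G p) = (F q - F p) + (G q - G p) by ring.
apply: le_lt_trans (ler_normD _ _) _.
have -> : e = e / 2 + e / 2 by field.
exact: ltrD.
Qed.

Lemma ctsAt_opp F p : ctsAt F p -> ctsAt (fun q => - F q) p.
Proof.
move=> cF e e0; have [d d0 H] := cF e e0; exists d => // q sq Hq.
by rewrite -opprD normrN; apply: H.
Qed.

Lemma ctsAt_abs F p : ctsAt F p -> ctsAt (fun q => `|F q|) p.
Proof.
move=> cF e e0; have [d d0 H] := cF e e0; exists d => // q sq Hq.
exact: le_lt_trans (ler_dist_dist _ _) (H q sq Hq).
Qed.

Lemma ctsAt_mul F G p : ctsAt F p -> ctsAt G p -> ctsAt (fun q => F q * G q) p.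
Proof.
move=> cF cG e e0.
set A := `|F p|; set B := `|G p|.
have A0 : 0 <= A by rewrite normr_ge0.
have B0 : 0 <= B by rewrite normr_ge0.
have e1 : 0 < Num.min 1 (e / (2 * (B + 1))).
  by rewrite lt_min ltr01 /= divr_gt0 // mulr_gt0 // ltr_wpDl.
have e2 : 0 < e / (2 * (A + 1)) by rewrite divr_gt0 // mulr_gt0 // ltr_wpDl.
have [d1 d10 H1] := cF _ e1; have [d2 d20 H2] := cG _ e2.
exists (Num.min d1 d2); first by rewrite lt_min d10 d20.
move=> q sq H.
have h1 := H1 q sq (fun v vs => mlt_l (H v vs)).
have h2 := H2 q sq (fun v vs => mlt_r (H v vs)).
move: h1; rewrite lt_min => /andP[h1 h1'].
have -> : F q * G q - F p * G p = F q * (G q - G p) + (F q - F p) * G p by ring.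
apply: le_lt_trans (ler_normD _ _) _; rewrite !normrM.
have Fq : `|F q| <= A + 1.
  have : `|F q| <= `|F p| + `|F q - F p|.
    by rewrite -[X in `|X| <= _](subrKC (F p)) ler_normD.
  by move=> h; apply: (le_trans h); rewrite lerD2l ltW.
have t1 : `|F q| * `|G q - G p| <= (A + 1) * (e / (2 * (A + 1))).
  apply: ler_pM => //; exact: ltW.
have t2 : `|F q - F p| * B <= e / (2 * (B + 1)) * B.
  by apply: ler_wpM2r => //; apply: ltW.
have t1' : (A + 1) * (e / (2 * (A + 1))) = e / 2.
  by field; rewrite gt_eqF // ltr_wpDl.
have t2' : e / (2 * (B + 1)) * B <= e / 2.
  have B1 : 0 < B + 1 by rewrite ltr_wpDl.
  have h : B / (B + 1) <= 1 by rewrite ler_pdivrMr // mul1r lerDl.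
  have -> : e / (2 * (B + 1)) * B = e / 2 * (B / (B + 1)) by field; rewrite gt_eqF.
  by rewrite ler_piMr // divr_ge0 // ltW.
have h2' : `|F q| * `|G q - G p| < (A + 1) * (e / (2 * (A + 1))) \/
           `|F q| * `|G q - G p| <= (A + 1) * (e / (2 * (A + 1))) by right.
have hh : `|F q| * `|G q - G p| + `|F q - F p| * B < e.
  case: (eqVneq `|F q| 0) => [->|nz].
    rewrite mul0r add0r; have := le_trans t2 t2'; lra.
  have : `|F q| * `|G q - G p| < (A + 1) * (e / (2 * (A + 1))).
    apply: (@lt_le_trans _ _ (`|F q| * (e / (2 * (A + 1))))).
      by rewrite ltr_pM2l // lt0r nz normr_ge0.
    by rewrite ler_pM2r.
  rewrite t1' => lt1. lra.
exact: hh.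
Qed.

Lemma ctsAt_inv F p : ctsAt F p -> F p != 0 -> ctsAt (fun q => (F q)^-1) p.
Proof.
move=> cF nz e e0.
set B := `|F p|.
have B0 : 0 < B by rewrite normr_gt0.
have e1 : 0 < Num.min (B / 2) (e * B ^+ 2 / 2).
  by rewrite lt_min !divr_gt0 // mulr_gt0 // exprn_gt0.
have [d d0 H] := cF _ e1; exists d => // q sq Hq.
move: (H q sq Hq); rewrite lt_min => /andP[h1 h2].
have Fq : B / 2 <= `|F q|.
  have : `|F p| <= `|F q| + `|F p - F q|.
    by rewrite -[X in `|X| <= _](subrKC (F q)) ler_normD.
  rewrite distrC -/B => h. lra.
have Fq0 : 0 < `|F q| by apply: lt_le_trans Fq; rewrite divr_gt0.
have Fqn : F q != 0 by rewrite -normr_gt0.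
have -> : (F q)^-1 - (F p)^-1 = (F p - F q) / (F q * F p).
  by field; rewrite ?Fqn ?nz.

rewrite normrM normfV normrM distrC ltr_pdivrMr ?mulr_gt0 //.
apply: lt_le_trans h2 _.
rewrite -/B expr2.
have hb : B / 2 * B <= `|F q| * B by rewrite ler_pM2r.
have -> : e * (B * B) / 2 = e * (B / 2 * B) by field.
by rewrite ler_pM2l.
Qed.

Lemma ctsAt_sum (I : Type) (r : seq I) (F : I -> (V -> R) -> R) p :
  (forall i, ctsAt (F i) p) -> ctsAt (fun q => \sum_(i <- r) F i q) p.
Proof.
move=> cF; elim: r => [|i r IH].
  under eq_fun do rewrite big_nil. by apply: ctsAt_const.
under eq_fun do rewrite big_cons.
exact: (ctsAt_add (cF i) IH).
Qed.

Lemma ctsAt_min F G p : ctsAt F p -> ctsAt G p -> ctsAt (fun q => Num.min (F q) (G q)) p.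
Proof.
move=> cF cG e e0.
have [d1 d10 H1] := cF _ e0; have [d2 d20 H2] := cG _ e0.
exists (Num.min d1 d2); first by rewrite lt_min d10 d20.
move=> q sq H.
have := H1 q sq (fun v vs => mlt_l (H v vs)).
have := H2 q sq (fun v vs => mlt_r (H v vs)).
rewrite !ltr_norml !minEle.
by case: (leP (F q) (G q)); case: (leP (F p) (G p)) => ? ? /andP[? ?] /andP[? ?];
  apply/andP; split; lra.
Qed.

Lemma ctsAt_bigmin (I : Type) (r : seq I) (F : I -> (V -> R) -> R) c p :
  (forall i, ctsAt (F i) p) -> ctsAt (fun q => \big[Num.min/c]_(i <- r) F i q) p.
Proof.
move=> cF; elim: r => [|i r IH].
  under eq_fun do rewrite big_nil. by apply: ctsAt_const.
under eq_fun do rewrite big_cons.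
exact: (ctsAt_min (cF i) IH).
Qed.

End Cts.

Lemma seq_unif (R : realType) (T : eqType) (rs : seq T) (P : T -> R -> Prop) :
  (forall r e e', 0 < e' -> e' <= e -> P r e -> P r e') ->
  (forall r, r \in rs -> exists2 e, 0 < e & P r e) ->
  exists2 e, 0 < e & forall r, r \in rs -> P r e.
Proof.
move=> mono; elim: rs => [|r rs IH] H.
  by exists 1 => // r; rewrite in_nil.
have [e1 e10 H1] := H r (mem_head _ _).
have [e2 e20 H2] := IH (fun r' r'in => H r' (ltac:(by rewrite in_cons r'in orbT))).
exists (Num.min e1 e2); first by rewrite lt_min e10 e20.
move=> r'; rewrite in_cons => /orP[/eqP->|r'in].
  by apply: (mono _ e1) => //; [rewrite lt_min e10 e20 | rewrite ge_min lexx].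
by apply: (mono _ e2 _ _ _ (H2 r' r'in)); [rewrite lt_min e10 e20 | rewrite ge_min lexx orbT].
Qed.

Section Cont.
Variables (R : realType) (V1 V2 : choiceType) (K1 : set {fset V1}) (K2 : set {fset V2}).
Hypothesis K2closed : forall r r', K2 r' -> r `<=` r' -> r != fset0 -> K2 r.

Lemma real_cont (F : realization R K1 -> realization R K2) (Phi : (V1 -> R) -> V2 -> R) :
  (forall p, proj1_sig (F p) = Phi (proj1_sig p)) ->
  (forall s, K1 s -> exists t : {fset V2},
     (forall q : realization R K1, supported_in s q -> forall w, w \notin t -> Phi (proj1_sig q) w = 0) /\
     (forall p : realization R K1, supported_in s p -> forall w, w \in t ->
        ctsAt s (fun q => Phi q w) (proj1_sig p))) ->
  continuous F.
Proof.
move=> FE Hs; apply/continuousP => U oU.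
change (@realization_open R V1 K1 (F @^-1` U)).
have {}oU : @realization_open R V2 K2 U := oU.
move=> s Ks p Up sp.
have [t [ht hc]] := Hs s Ks.
set r0 := [fset w in t | Phi (proj1_sig p) w != 0].
have [eps eps0 Heps] := @seq_unif R _ (enum_fset (fpowerset t))
  (fun r e => K2 r -> r0 `<=` r -> forall y : realization R K2, supported_in r y ->
      (forall w, w \in r -> `|proj1_sig y w - proj1_sig (F p) w| < e) -> U y)
  ltac:(move=> r e e' e'0 e'e H Kr r0r y sy hy; apply: H => // w wr;
        exact: lt_le_trans (hy w wr) e'e)
  ltac:(move=> r _; case: (pselect (K2 r /\ r0 `<=` r)) => [[Kr r0r]|nK];
    [ have [e e0 He] := oU r Kr (F p) Up ltac:(move=> w wr; rewrite FE;
         case: (boolP (w \in t)) => wt; last exact: ht;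
         apply/eqP; apply: contraNT wr => nz; apply: (fsubsetP r0r);
         by rewrite /r0 !inE wt nz);
      by exists e => // _ _ y sy hy; apply: He
    | by exists 1 => // Kr r0r; exfalso; apply: nK ]).
have [eta eta0 Heta] := @seq_unif R _ (enum_fset r0)
  (fun w e => e <= `|Phi (proj1_sig p) w|)
  ltac:(by move=> w e e' _ e'e H; apply: le_trans H)
  ltac:(move=> w; rewrite /= inE => /andP[_ nz];
        by exists `|Phi (proj1_sig p) w|; rewrite ?normr_gt0).
have [d d0 Hd] := @seq_unif R _ (enum_fset t)
  (fun w d => forall q, supp_in s q -> (forall v, v \in s -> `|q v - proj1_sig p v| < d) ->
      `|Phi q w - Phi (proj1_sig p) w| < Num.min eps eta)
  ltac:(move=> w e e' _ e'e H q sq hq; apply: H => // v vs;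
        exact: lt_le_trans (hq v vs) e'e)
  ltac:(move=> w wt; apply: (hc p sp w wt); by rewrite lt_min eps0 eta0).
exists d => // q sq hq.
set r := [fset w in t | Phi (proj1_sig q) w != 0].
have close w : w \in t -> `|Phi (proj1_sig q) w - Phi (proj1_sig p) w| < Num.min eps eta.
  by move=> wt; apply: (Hd w wt) => //.
have r0r : r0 `<=` r.
  apply/fsubsetP => w; rewrite !inE => /andP[wt nz]; rewrite wt /=.
  have h := mlt_r (close w wt).
  have hw : eta <= `|Phi (proj1_sig p) w| by apply: Heta; rewrite /r0 !inE wt nz.
  apply/eqP => z; move: h; rewrite z sub0r normrN => h.
  by move: (lt_le_trans h hw); rewrite ltxx.
have rt : r `<=` t by apply/fsubsetP => w; rewrite inE => /andP[].
have qsupp : supported_in r (F q).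
  move=> w wr; rewrite FE; case: (boolP (w \in t)) => wt; last exact: ht.
  by apply/eqP; apply: contraNT wr => nz; rewrite /r !inE wt nz.
have Kr : K2 r.
  case: (proj2_sig (F q)) => r' [Kr' zr' pos sum1].
  apply: (K2closed Kr').
    apply/fsubsetP => w; rewrite inE => /andP[wt nz]; apply: contraNT nz => wr'.
    by rewrite -FE zr'.
  apply/eqP => r0e; move: sum1; rewrite big1_seq.
    by move/eqP; rewrite eq_sym oner_eq0.
  by move=> w _; apply: qsupp; rewrite r0e inE.
apply: (Heps r) => //.
  by rewrite fpowersetE.
move=> w wr; rewrite !FE; exact: mlt_l (close w (fsubsetP rt w wr)).
Qed.
End Cont.

Lemma ltraceE (V : choiceType) n (tau : {fset V + ('I_n * bool)}) x :
  (x \in ltrace tau) = (inl x \in tau).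
Proof.
rewrite /ltrace; apply/imfsetP/idP => [[y]|xt].
  rewrite /= mem_pmap => /mapP[z zt] /= e ->; case: z zt e => //= ? ? [->] //=.
exists x => //; rewrite mem_pmap; apply/mapP; by exists (inl x).
Qed.

Lemma sum_supp_eq (R : realType) (T : eqType) (s1 s2 : seq T) (f : T -> R) :
  uniq s1 -> uniq s2 -> (forall w, w \in s1 -> w \notin s2 -> f w = 0) ->
  (forall w, w \in s2 -> w \notin s1 -> f w = 0) ->
  \sum_(w <- s1) f w = \sum_(w <- s2) f w.
Proof.
move=> u1 u2 h1 h2.
rewrite (bigID (mem s2)) /= [X in _ + X]big1_seq => [|w /andP[? ?]]; last by apply: h1.
rewrite addr0 -big_filter; symmetry.
rewrite (bigID (mem s1)) /= [X in _ + X]big1_seq => [|w /andP[? ?]]; last by apply: h2.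
rewrite addr0 -big_filter.
apply: perm_big; apply: uniq_perm; rewrite ?filter_uniq //.
by move=> w; rewrite !mem_filter andbC.
Qed.

Lemma susp_closed (V : choiceType) n (L : set {fset V}) :
  (forall r r', L r' -> r `<=` r' -> r != fset0 -> L r) ->
  forall r r', suspension_n n L r' -> r `<=` r' -> r != fset0 -> suspension_n n L r.
Proof.
move=> Lc r r' [r'0 hl hp] rr' r0; split => //.
- case: (eqVneq (ltrace r) fset0) => [->|ne]; first by left.
  right; have sub : ltrace r `<=` ltrace r'.
    by apply/fsubsetP => x; rewrite !ltraceE; apply: (fsubsetP rr').
  case: hl => [e|Lr']; last exact: Lc Lr' sub ne.
  by move: sub ne; rewrite e fsubset0 => /eqP ->; rewrite eqxx.
- move=> i [h1 h2]; apply: (hp i); split; exact: (fsubsetP rr').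
Qed.

Lemma obs_closed (V : choiceType) (K : set {fset V}) sigma :
  simplicial_complex K ->
  forall r r', obstruction K sigma r' -> r `<=` r' -> r != fset0 -> obstruction K sigma r.
Proof.
move=> [_ Kc] r r' [[Kr' dj] [_ Ku]] rr' r0.
have Kr : K r := Kc _ _ Kr' rr' r0.
split; split => //.
- apply/fdisjointP => x xr; exact: (fdisjointP dj) (fsubsetP rr' x xr).
- apply: (Kc _ _ Ku); first by apply: fsetSU.
  by apply: contraNneq r0 => /eqP; rewrite fsetU_eq0 => /andP[/eqP -> _].
Qed.

Lemma lus_closed (V : choiceType) (K : set {fset V}) sigma :
  simplicial_complex K ->
  forall r r', link_union_star K sigma r' -> r `<=` r' -> r != fset0 -> link_union_star K sigma r.
Proof.
move=> [_ Kc] r r' [[v vs [Kr' vr']] [_ Ku]] rr' r0.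
have Kr : K r := Kc _ _ Kr' rr' r0.
split; first by exists v => //; split => //; apply: contra vr'; apply: (fsubsetP rr').
split => //; apply: (Kc _ _ Ku); first by apply: fsetSU.
by apply: contraNneq r0 => /eqP; rewrite fsetU_eq0 => /andP[/eqP -> _].
Qed.

Section Main.
Variables (R : realType) (V : choiceType) (K : set {fset V}) (sigma : {fset V}) (n : nat) (x0 : V).
Hypotheses (scK : simplicial_complex K) (Ks : K sigma) (card : #|` sigma| = n.+1).

Definition es := enum_fset sigma.
Definition a (j : nat) := nth x0 es j.
Definition xc (f : V -> R) (i : 'I_n) := f (a i.+1) - f (a 0).
Definition posp (x : R) := (x + `|x|) / 2.
Definition Dn (f : V -> R) := 1 - \sum_(v <- es) f v + \sum_(i < n) `|xc f i|.
Definition Phi (f : V -> R) (w : V + ('I_n * bool)) : R :=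
  match w with
  | inl v => (if v \in sigma then 0 else f v) / Dn f
  | inr (i, b) => posp (if b then xc f i else - xc f i) / Dn f
  end.

Definition yc (h : V + ('I_n * bool) -> R) (i : 'I_n) := h (inr (i, true)) - h (inr (i, false)).
Definition mn h := \big[Num.min/0]_(i < n) yc h i.
Definition gc h (v : V) := match index v es with
  | 0 => - mn h
  | k.+1 => (if insub k is Some i then yc h i else 0) - mn h end.
Definition En h := 1 - \sum_(i < n) (h (inr (i, true)) + h (inr (i, false))) + \sum_(v <- es) gc h v.
Definition Psi h (v : V) := (if v \in sigma then gc h v else h (inl v)) / En h.

Lemma es_uniq : uniq es. Proof. exact: fset_uniq. Qed.
Lemma size_es : size es = n.+1. Proof. by rewrite -card. Qed.
Lemma a_mem j : (j < n.+1)%N -> a j \in sigma.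
Proof. by move=> hj; have := @mem_nth _ x0 es j; rewrite size_es; apply. Qed.
Lemma index_a j : (j < n.+1)%N -> index (a j) es = j.
Proof. by move=> hj; rewrite /a index_uniq // ?es_uniq // size_es. Qed.
Lemma a_index v : v \in sigma -> a (index v es) = v.
Proof. by move=> vs; rewrite /a nth_index. Qed.
Lemma index_lt v : v \in sigma -> (index v es < n.+1)%N.
Proof. by move=> vs; rewrite -size_es index_mem. Qed.

Lemma gc0 h : gc h (a 0) = - mn h.
Proof. by rewrite /gc index_a. Qed.
Lemma gcS h (i : 'I_n) : gc h (a i.+1) = yc h i - mn h.
Proof.
rewrite /gc index_a ?ltnS //; case: insubP => [j _ e|]; last by rewrite ltn_ord.
by congr (yc h _ - _); apply: val_inj.
Qed.

Lemma posp_ge0 x : 0 <= posp x.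
Proof. rewrite /posp divr_ge0 //; have : - x <= `|x| by rewrite -normrN ler_norm. lra. Qed.
Lemma pospB x : posp x - posp (- x) = x.
Proof. rewrite /posp normrN; lra. Qed.
Lemma pospD x : posp x + posp (- x) = `|x|.
Proof. rewrite /posp normrN; lra. Qed.
Lemma posp_le0 x : x <= 0 -> posp x = 0.
Proof. by move=> h; rewrite /posp ler0_norm // subrr mul0r. Qed.
Lemma posp_ge0id x : 0 <= x -> posp x = x.
Proof. by move=> h; rewrite /posp ger0_norm //; lra. Qed.


Lemma sum_es_mu (f : V -> R) (mu : {fset V}) :
  (forall v, v \notin mu -> f v = 0) ->
  \sum_(v <- mu) (if v \in sigma then 0 else f v) = \sum_(v <- mu) f v - \sum_(v <- es) f v.
Proof.
move=> zf.
have -> : \sum_(v <- es) f v = \sum_(v <- mu) (if v \in sigma then f v else 0).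
  have -> : \sum_(v <- es) f v = \sum_(v <- es) (if v \in sigma then f v else 0).
    by apply: eq_big_seq => v ves; rewrite (_ : v \in sigma = true).
  apply: sum_supp_eq; rewrite ?es_uniq ?fset_uniq //.
  - by move=> w wes wmu; rewrite zf //; case: (w \in sigma).
  - by move=> w wmu; rewrite (_ : (w \in es) = (w \in sigma)) // => /negbTE ->.
rewrite -sumrB; apply: eq_bigr => v _; case: (v \in sigma); rewrite ?subrr ?subr0 //.
Qed.

Lemma sum_es_a (F : V -> R) : \sum_(v <- es) F v = \sum_(j < n.+1) F (a j).
Proof.
by rewrite (big_nth x0) size_es big_mkord.
Qed.

Lemma A_facts (f : V -> R) (mu : {fset V}) :
  link_union_star K sigma mu -> (forall v, v \notin mu -> f v = 0) -> (forall v, 0 <= f v) ->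
  \sum_(v <- mu) f v = 1 ->
  [/\ 1 - \sum_(v <- es) f v = \sum_(v <- mu) (if v \in sigma then 0 else f v),
      exists2 j, (j < n.+1)%N & f (a j) = 0 & 0 < Dn f].
Proof.
move=> [[v vs [Kmu vmu]] [_ Ku]] zf pf s1.
have e1 : 1 - \sum_(v <- es) f v = \sum_(v <- mu) (if v \in sigma then 0 else f v).
  by rewrite sum_es_mu // s1.
have ej : exists2 j, (j < n.+1)%N & f (a j) = 0.
  by exists (index v es); [apply: index_lt | rewrite a_index // zf].
split => //.
have T1 : 0 <= \sum_(v <- mu) (if v \in sigma then 0 else f v).
  by apply: sumr_ge0 => w _; case: (w \in sigma).
have T2 : 0 <= \sum_(i < n) `|xc f i| by apply: sumr_ge0 => i _.
rewrite lt_def; apply/andP; split; last by rewrite /Dn e1 addr_ge0.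
apply/eqP => D0.
have E1 : \sum_(v <- mu) (if v \in sigma then 0 else f v) = 0.
  by move: D0; rewrite /Dn e1; lra.
have E2 : \sum_(i < n) `|xc f i| = 0 by move: D0; rewrite /Dn e1; lra.
have x0i (i : 'I_n) : f (a i.+1) = f (a 0).
  have h0 : forall j : 'I_n, true -> 0 <= `|xc f j| by [].
  have := @psumr_eq0P _ _ (fun _ => true) (fun j => `|xc f j|) h0 E2 i isT.
  by move/eqP; rewrite normr_eq0 subr_eq0 => /eqP.
have fa0 : f (a 0) = 0.
  case: ej => [[|k] kn fk]; first by [].
  by rewrite -fk -(x0i (Ordinal (kn : (k < n)%N))).
have : \sum_(v <- es) f v = 0.
  rewrite sum_es_a big1 // => [[[|k] kn]] _ //=.
  by rewrite (x0i (Ordinal (kn : (k < n)%N))).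
by move: E1; rewrite -e1 => ? ?; lra.
Qed.

End Main.

Lemma sum_pair (R : realType) n (G : 'I_n * bool -> R) :
  \sum_(p <- enum {: 'I_n * bool}) G p = \sum_(i < n) (G (i, true) + G (i, false)).
Proof.
rewrite big_enum /=; symmetry.
transitivity (\sum_(i < n) \sum_(b : bool) G (i, b)); first by apply: eq_bigr => i _; rewrite big_bool.
rewrite pair_big /=; apply: eq_big => // [[i b]] //.
Qed.
Lemma sum_pair' (R : realType) (V : Type) n (F : V + ('I_n * bool) -> R) :
  \sum_(w <- map inr (enum {: 'I_n * bool})) F w =
  \sum_(i < n) (F (inr (i, true)) + F (inr (i, false))).
Proof. by rewrite big_map sum_pair. Qed.

Lemma memimg_l (V : choiceType) n (A : {fset V}) (B : seq 'I_n) (c : 'I_n -> bool) v :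
 (inl v \in ([fset inl v | v in A] `|` [fset inr (i, c i) | i in B] : {fset V + ('I_n * bool)}))
   = (v \in A).
Proof.
apply/idP/idP; rewrite in_fsetU.
  by case/orP => /imfsetP [u uA //= [->]].
by move=> vA; apply/orP; left; apply/imfsetP; exists v.
Qed.
Lemma memimg_r (V : choiceType) n (A : {fset V}) (B : seq 'I_n) (c : 'I_n -> bool) i b :
 (inr (i, b) \in ([fset inl v | v in A] `|` [fset inr (i, c i) | i in B] : {fset V + ('I_n * bool)}))
   = ((i \in B) && (b == c i)).
Proof.
apply/idP/idP; rewrite in_fsetU.
  by case/orP => /imfsetP [u uA //= [-> ->]]; rewrite uA eqxx.
by case/andP => iB /eqP ->; apply/orP; right; apply/imfsetP; exists i.
Qed.

Section BM.
Variables (R : realDomainType) (I : eqType).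
Lemma bigmin_le_c (r : seq I) (F : I -> R) c : \big[Num.min/c]_(i <- r) F i <= c.
Proof.
elim: r => [|i r IH]; first by rewrite big_nil.
by rewrite big_cons ge_min IH orbT.
Qed.
Lemma bigmin_le_i (r : seq I) (F : I -> R) c i : i \in r -> \big[Num.min/c]_(j <- r) F j <= F i.
Proof.
elim: r => [|j r IH]; first by rewrite in_nil.
rewrite in_cons big_cons ge_min => /orP[/eqP ->|ir]; first by rewrite lexx.
by rewrite IH ?orbT.
Qed.
Lemma bigmin_ge (r : seq I) (F : I -> R) c d : (forall i, d <= F i) -> d <= c ->
  d <= \big[Num.min/c]_(i <- r) F i.
Proof.
move=> hF hc; elim: r => [|i r IH]; first by rewrite big_nil.
by rewrite big_cons le_min hF IH.
Qed.
Lemma bigmin_cases (r : seq I) (F : I -> R) c :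
  \big[Num.min/c]_(i <- r) F i = c \/ exists2 i, i \in r & \big[Num.min/c]_(j <- r) F j = F i.
Proof.
elim: r => [|i r IH]; first by rewrite big_nil; left.
rewrite big_cons minEle; case: ifP => _; first by right; exists i; rewrite ?mem_head.
case: IH => [->|[j jr ->]]; [by left | by right; exists j; rewrite // in_cons jr orbT].
Qed.
Lemma bigmin_scale (r : seq I) (F : I -> R) c d : 0 < d ->
  \big[Num.min/c * d]_(i <- r) (F i * d) = (\big[Num.min/c]_(i <- r) F i) * d.
Proof.
move=> d0; elim: r => [|i r IH]; first by rewrite !big_nil.
rewrite !big_cons IH !minEle ler_pM2r //; by case: ifP.
Qed.
End BM.

Section Main2.
Variables (R : realType) (V : choiceType) (K : set {fset V}) (sigma : {fset V}) (n : nat) (x0 : V).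
Hypotheses (scK : simplicial_complex K) (Ks : K sigma) (card : #|` sigma| = n.+1).

Local Notation Phi := (@Phi R V sigma n x0).
Local Notation Dn := (@Dn R V sigma n x0).
Local Notation xc := (@xc R V sigma n x0).
Local Notation Psi := (@Psi R V sigma n).
Local Notation gc := (@gc R V sigma n).
Local Notation En := (@En R V sigma n).
Local Notation a := (@a V sigma x0).
Local Notation mn := (@mn R V n).
Local Notation yc := (@yc R V n).
Local Notation es := (@es V sigma).

Lemma PhiP f : is_point (link_union_star K sigma) f ->
  is_point (suspension_n n (obstruction K sigma)) (Phi f).
Proof.
case=> mu [Amu zf pf s1].
have [e1 [j jn fj] Dp] := A_facts x0 card Amu zf pf s1.
have [[v0 v0s [Kmu v0mu]] [_ Ku]] := Amu.
pose c i := (0 <= xc f i).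
pose tau : {fset V + ('I_n * bool)} :=
  [fset inl v | v in mu `\` sigma] `|` [fset inr (i, c i) | i in enum 'I_n].
have ml v : (inl v \in tau) = (v \in mu `\` sigma).
  exact: memimg_l.
have mr i b : (inr (i, b) \in tau) = (b == c i).
  by rewrite memimg_r mem_enum.
have D0 : Dn f != 0 by rewrite gt_eqF.
have ztau w : w \notin tau -> Phi f w = 0.
  case: w => [v|[i b]]; rewrite ?ml ?mr /=.
  - rewrite in_fsetD negb_and negbK => /orP[vs|vmu]; first by rewrite vs mul0r.
    by case: (v \in sigma); rewrite ?mul0r // zf // mul0r.
  - rewrite /c; case: b => /=; rewrite ?eqbF_neg ?eqb_id ?negbK => h.
      by rewrite posp_le0 ?mul0r // ltW // ltNge.
    by rewrite posp_le0 ?mul0r // oppr_le0.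
have nonneg w : 0 <= Phi f w.
  case: w => [v|[i b]] /=; apply: divr_ge0; rewrite ?(ltW Dp) ?posp_ge0 //.
  by case: (v \in sigma).
have sum1 : \sum_(w <- tau) Phi f w = 1.
  rewrite (@sum_supp_eq _ _ _ (map inl (enum_fset mu) ++ map inr (enum {: 'I_n * bool}))).
  - rewrite big_cat sum_pair' big_map /=.
    have -> : \sum_(i < n) (posp (xc f i) / Dn f + posp (- xc f i) / Dn f) =
              (\sum_(i < n) `|xc f i|) / Dn f.
      by rewrite mulr_suml; apply: eq_bigr => i _; rewrite -mulrDl pospD.
    rewrite -mulr_suml -e1 -mulrDl.
    by rewrite [X in X / _](_ : _ = Dn f) ?divff.
  - exact: fset_uniq.
  - rewrite cat_uniq; apply/and3P; split.
    + by rewrite map_inj_uniq ?fset_uniq // => ? ? [].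
    + by apply/hasPn => w /mapP [p _ ->]; apply/negP => /mapP [u _].
    + rewrite map_inj_uniq; last by move=> ? ? [].
      exact: enum_uniq.
  - move=> w wt; rewrite mem_cat; case: w wt => [v|p] wt.
      by move: wt; rewrite ml in_fsetD => /andP[_ vmu]; rewrite (map_f inl vmu).
    by rewrite (map_f inr) ?orbT // mem_enum.
  - by move=> w _; apply: ztau.
exists tau; split => //.
split.
- apply/eqP => t0; move: sum1; rewrite t0 big1_seq => [/eqP|w].
    by rewrite eq_sym oner_eq0.
  by rewrite in_fset0 andbF.
- have lt : ltrace tau = mu `\` sigma by apply/fsetP => v; rewrite ltraceE ml.
  rewrite lt; case: (eqVneq (mu `\` sigma) fset0) => [->|ne]; [by left | right].
  have Kd : K (mu `\` sigma) := scK.2 _ _ Kmu (fsubsetDl _ _) ne.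
  split; split => //.
  + by apply/fdisjointP => v; rewrite in_fsetD => /andP[].
  + apply: (scK.2 _ _ Ku); first by apply: fsetSU; exact: fsubsetDl.
    by apply: contraNneq ne => /eqP; rewrite fsetU_eq0 => /andP[/eqP -> _].
- by move=> i []; rewrite !mr => /eqP <- /eqP.
Qed.

Lemma mn_le0 h : mn h <= 0.
Proof. exact: bigmin_le_c. Qed.
Lemma mn_le_y h i : mn h <= yc h i.
Proof. by apply: bigmin_le_i; rewrite mem_index_enum. Qed.

Lemma gc_ge0 h v : v \in sigma -> 0 <= gc h v.
Proof.
move=> vs; rewrite -(a_index x0 vs); move: (index_lt card vs).
case: (index v es) => [|k] kn; first by rewrite gc0 // oppr_ge0 mn_le0.
by rewrite (gcS x0 card h (Ordinal (kn : (k < n)%N))) subr_ge0 mn_le_y.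
Qed.

Lemma gc_zero h : exists2 j, (j < n.+1)%N & gc h (a j) = 0.
Proof.
case: (bigmin_cases (index_enum 'I_n) (yc h) 0) => [e|[i _ e]].
  by exists 0%N => //; rewrite gc0 // /mn e oppr0.
by exists i.+1; rewrite ?ltnS // (gcS x0 card) /mn e subrr.
Qed.

Lemma PsiP h : is_point (suspension_n n (obstruction K sigma)) h ->
  is_point (link_union_star K sigma) (Psi h).
Proof.
case=> tau [[t0 hl hp] zh ph s1].
set rho := ltrace tau.
have hdis v : v \in rho -> v \notin sigma.
  case: hl => [e|[[_ dj] _]]; first by rewrite /rho e in_fset0.
  by move=> vr; apply: (fdisjointP dj).
have hK : K (rho `|` sigma).
  by case: hl => [e|[_ [_ Ku]]]; [rewrite /rho e fset0U | ].
have zl v : v \notin rho -> h (inl v) = 0 by rewrite /rho ltraceE; apply: zh.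
have hpair i : h (inr (i, true)) = 0 \/ h (inr (i, false)) = 0.
  case: (boolP (inr (i, true) \in tau)) => ht; last by left; apply: zh.
  case: (boolP (inr (i, false) \in tau)) => hf; last by right; apply: zh.
  by exfalso; apply: (hp i).
have h4 : \sum_(v <- rho) h (inl v) + \sum_(i < n) (h (inr (i, true)) + h (inr (i, false))) = 1.
  rewrite -s1 -(big_map inl xpredT) -(sum_pair' h) -big_cat /=.
  symmetry; apply: sum_supp_eq.
  - exact: fset_uniq.
  - rewrite cat_uniq; apply/and3P; split.
    + by rewrite map_inj_uniq ?fset_uniq // => ? ? [].
    + by apply/hasPn => w /mapP [p _ ->]; apply/negP => /mapP [u _].
    + by rewrite map_inj_uniq ?enum_uniq // => ? ? [].
  - move=> w wt; rewrite mem_cat; case: w wt => [v|p] wt.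
      by rewrite (map_f inl) // /rho ltraceE.
    by rewrite (map_f inr) ?orbT // mem_enum.
  - by move=> w _; apply: zh.
have Ee : En h = \sum_(v <- rho) h (inl v) + \sum_(v <- es) gc h v.
  by rewrite /En; lra.
have S1 : 0 <= \sum_(v <- rho) h (inl v) by apply: sumr_ge0.
have G0 : 0 <= \sum_(v <- es) gc h v.
  by rewrite big_seq; apply: sumr_ge0 => v vs; apply: gc_ge0.
have Ep : 0 < En h.
  rewrite lt_def Ee addr_ge0 // andbT; apply/eqP => E0.
  have G00 : \sum_(v <- es) gc h v = 0 by lra.
  have S10 : \sum_(v <- rho) h (inl v) = 0 by lra.
  have gz (j : 'I_n.+1) : gc h (a j) = 0.
    move: G00; rewrite (sum_es_a x0 card) => G00.
    have h0 : forall j : 'I_n.+1, true -> 0 <= gc h (a j).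
      by move=> j' _; apply: gc_ge0; apply: (a_mem x0 card); exact: ltn_ord.
    exact: (@psumr_eq0P _ _ (fun _ => true) (fun j : 'I_n.+1 => gc h (a j)) h0 G00 j isT).
  have mn0 : mn h = 0.
    by have := gz ord0; rewrite gc0 // => /eqP; rewrite oppr_eq0 => /eqP.
  have y0 (i : 'I_n) : yc h i = 0.
    have := gz (lift ord0 i); rewrite /= (gcS x0 card) mn0 subr0 //.
  have hz (i : 'I_n) : h (inr (i, true)) + h (inr (i, false)) = 0.
    have := y0 i; rewrite /yc => /eqP; rewrite subr_eq0 => /eqP e.
    by case: (hpair i) => z; lra.
  move: h4; rewrite S10 big1 ?add0r; last by move=> i _; apply: hz.
  by move/eqP; rewrite eq_sym oner_eq0.
have [j0 j0n gj0] := gc_zero h.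
have aj0 : a j0 \in sigma by apply: (a_mem x0 card).
set mu := rho `|` (sigma `\` [fset a j0]).
have zmu v : v \notin mu -> Psi h v = 0.
  rewrite in_fsetU in_fsetD in_fset1 negb_or => /andP[vr].
  rewrite /Psi; case: (boolP (v \in sigma)) => vs; last by rewrite zl // mul0r.
  by rewrite andbT negbK => /eqP ->; rewrite gj0 mul0r.
have pos v : 0 <= Psi h v.
  rewrite /Psi divr_ge0 ?(ltW Ep) //; case: (boolP (v \in sigma)) => vs //.
  exact: gc_ge0.
have sum1 : \sum_(v <- mu) Psi h v = 1.
  rewrite (@sum_supp_eq _ _ _ (rho ++ es)).
  - rewrite big_cat /=.
    have -> : \sum_(v <- rho) Psi h v = (\sum_(v <- rho) h (inl v)) / En h.
      by rewrite mulr_suml; apply: eq_big_seq => v vr; rewrite /Psi (negbTE (hdis v vr)).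
    have -> : \sum_(v <- es) Psi h v = (\sum_(v <- es) gc h v) / En h.
      by rewrite mulr_suml; apply: eq_big_seq => v ves; rewrite /Psi (_ : v \in sigma = true).
    by rewrite -mulrDl -Ee divff // gt_eqF.
  - exact: fset_uniq.
  - rewrite cat_uniq fset_uniq es_uniq andbT /=.
    by apply/hasPn => w wes; apply/negP => wr; move: (hdis w wr); rewrite (_ : w \in sigma = true).
  - move=> w wm; rewrite mem_cat; move: wm; rewrite in_fsetU in_fsetD.
    case/orP => [->//|/andP[_ ws]].
    by rewrite (_ : w \in es = true) ?orbT.
  - by move=> w _; apply: zmu.
have aj0mu : a j0 \notin mu.
  rewrite in_fsetU in_fsetD in_fset1 eqxx /= orbF.
  by apply/negP => r; move: (hdis _ r); rewrite aj0.
have mu0 : mu != fset0.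
  apply/eqP => m0; move: sum1; rewrite m0 big1_seq => [/eqP|w].
    by rewrite eq_sym oner_eq0.
  by rewrite in_fset0 andbF.
have musub : mu `<=` rho `|` sigma by apply: fsetUS; exact: fsubsetDl.
have Kmu : K mu := scK.2 _ _ hK musub mu0.
exists mu; split => //.
split; first by exists (a j0) => //.
split => //; apply: (scK.2 _ _ hK).
  by rewrite fsubUset musub fsubsetUr.
by apply/eqP => e; move: (fsubsetUr mu sigma); rewrite e fsubset0 => /eqP s0; move: aj0; rewrite s0 in_fset0.
Qed.

Lemma posp_scale (x d : R) : 0 < d -> posp (x / d) = posp x / d.
Proof.
move=> d0; rewrite /posp normrM normfV (gtr0_norm d0).
by field; rewrite gt_eqF.
Qed.

Lemma PsiPhi f : is_point (link_union_star K sigma) f -> Psi (Phi f) = f.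
Proof.
case=> mu [Amu zf pf s1].
have [e1 [j jn fj] Dp] := A_facts x0 card Amu zf pf s1.
have D0 : Dn f != 0 by rewrite gt_eqF.
have ey i : yc (Phi f) i = xc f i / Dn f by rewrite /yc /= -mulrBl pospB.
have em : mn (Phi f) = - f (a 0) / Dn f.
  apply/eqP; rewrite eq_le; apply/andP; split.
    move: fj jn; case: j => [|k] fj kn.
      by rewrite fj oppr0 mul0r; apply: bigmin_le_c.
    apply: le_trans (mn_le_y _ (Ordinal (kn : (k < n)%N))) _.
    by rewrite ey /xc /= fj sub0r.
  apply: bigmin_ge => [i|]; last by rewrite mulNr oppr_le0 divr_ge0 // ltW.
  by rewrite ey /xc ler_pM2r ?invr_gt0 //; have := pf (a i.+1); lra.
have eg v : v \in sigma -> gc (Phi f) v = f v / Dn f.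
  move=> vs; rewrite -(a_index x0 vs); move: (index_lt card vs).
  case: (index v es) => [|k] kn; first by rewrite gc0 // em mulNr opprK.
  rewrite (gcS x0 card _ (Ordinal (kn : (k < n)%N))) ey em /xc /=.
  by rewrite mulNr opprK -mulrDl subrK.
have eE : En (Phi f) = (Dn f)^-1.
  rewrite /En.
  have -> : \sum_(i < n) (Phi f (inr (i, true)) + Phi f (inr (i, false))) =
            (\sum_(i < n) `|xc f i|) / Dn f.
    by rewrite mulr_suml; apply: eq_bigr => i _; rewrite /= -mulrDl pospD.
  have -> : \sum_(v <- es) gc (Phi f) v = (\sum_(v <- es) f v) / Dn f.
    by rewrite mulr_suml; apply: eq_big_seq => v ves; rewrite eg.
  have hD : Dn f = 1 - \sum_(v <- es) f v + \sum_(i < n) `|xc f i| by [].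
  move: D0; rewrite hD => D0'.
  by field.
apply: funext => v; rewrite /Psi eE; case: (boolP (v \in sigma)) => vs.
  by rewrite eg // invrK mulrAC -mulrA divff // mulr1.
by rewrite /= (negbTE vs) invrK mulrAC -mulrA divff // mulr1.
Qed.
Lemma S_facts h : is_point (suspension_n n (obstruction K sigma)) h ->
  [/\ 0 < En h, (forall i, h (inr (i, true)) = 0 \/ h (inr (i, false)) = 0),
      (forall v, v \in sigma -> h (inl v) = 0) & forall w, 0 <= h w].
Proof.
case=> tau [[t0 hl hp] zh ph s1].
set rho := ltrace tau.
have hdis v : v \in rho -> v \notin sigma.
  case: hl => [e|[[_ dj] _]]; first by rewrite /rho e in_fset0.
  by move=> vr; apply: (fdisjointP dj).
have hK : K (rho `|` sigma).
  by case: hl => [e|[_ [_ Ku]]]; [rewrite /rho e fset0U | ].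
have zl v : v \notin rho -> h (inl v) = 0 by rewrite /rho ltraceE; apply: zh.
have hpair i : h (inr (i, true)) = 0 \/ h (inr (i, false)) = 0.
  case: (boolP (inr (i, true) \in tau)) => ht; last by left; apply: zh.
  case: (boolP (inr (i, false) \in tau)) => hf; last by right; apply: zh.
  by exfalso; apply: (hp i).
have h4 : \sum_(v <- rho) h (inl v) + \sum_(i < n) (h (inr (i, true)) + h (inr (i, false))) = 1.
  rewrite -s1 -(big_map inl xpredT) -(sum_pair' h) -big_cat /=.
  symmetry; apply: sum_supp_eq.
  - exact: fset_uniq.
  - rewrite cat_uniq; apply/and3P; split.
    + by rewrite map_inj_uniq ?fset_uniq // => ? ? [].
    + by apply/hasPn => w /mapP [p _ ->]; apply/negP => /mapP [u _].
    + by rewrite map_inj_uniq ?enum_uniq // => ? ? [].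
  - move=> w wt; rewrite mem_cat; case: w wt => [v|p] wt.
      by rewrite (map_f inl) // /rho ltraceE.
    by rewrite (map_f inr) ?orbT // mem_enum.
  - by move=> w _; apply: zh.
have Ee : En h = \sum_(v <- rho) h (inl v) + \sum_(v <- es) gc h v.
  by rewrite /En; lra.
have S1 : 0 <= \sum_(v <- rho) h (inl v) by apply: sumr_ge0.
have G0 : 0 <= \sum_(v <- es) gc h v.
  by rewrite big_seq; apply: sumr_ge0 => v vs; apply: gc_ge0.
have Ep : 0 < En h.
  rewrite lt_def Ee addr_ge0 // andbT; apply/eqP => E0.
  have G00 : \sum_(v <- es) gc h v = 0 by lra.
  have S10 : \sum_(v <- rho) h (inl v) = 0 by lra.
  have gz (j : 'I_n.+1) : gc h (a j) = 0.
    move: G00; rewrite (sum_es_a x0 card) => G00.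
    have h0 : forall j : 'I_n.+1, true -> 0 <= gc h (a j).
      by move=> j' _; apply: gc_ge0; apply: (a_mem x0 card); exact: ltn_ord.
    exact: (@psumr_eq0P _ _ (fun _ => true) (fun j : 'I_n.+1 => gc h (a j)) h0 G00 j isT).
  have mn0 : mn h = 0.
    by have := gz ord0; rewrite gc0 // => /eqP; rewrite oppr_eq0 => /eqP.
  have y0 (i : 'I_n) : yc h i = 0.
    have := gz (lift ord0 i); rewrite /= (gcS x0 card) mn0 subr0 //.
  have hz (i : 'I_n) : h (inr (i, true)) + h (inr (i, false)) = 0.
    have := y0 i; rewrite /yc => /eqP; rewrite subr_eq0 => /eqP e.
    by case: (hpair i) => z; lra.
  move: h4; rewrite S10 big1 ?add0r; last by move=> i _; apply: hz.
  by move/eqP; rewrite eq_sym oner_eq0.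
split => // v vs; apply: zl; apply/negP => vr; by move: (hdis v vr); rewrite vs.
Qed.

Lemma PhiPsi h : is_point (suspension_n n (obstruction K sigma)) h -> Phi (Psi h) = h.
Proof.
move=> hP; have [Ep hpair hsig ph] := S_facts hP.
have E0 : En h != 0 by rewrite gt_eqF.
have Ga j : (j < n.+1)%N -> Psi h (a j) = gc h (a j) / En h.
  by move=> jn; rewrite /Psi (a_mem x0 card jn).
have ex i : xc (Psi h) i = yc h i / En h.
  rewrite /xc Ga ?ltnS // Ga // (gcS x0 card) gc0 //.
  by rewrite -mulrBl opprK subrK.
have ay i : `|yc h i| = h (inr (i, true)) + h (inr (i, false)).
  have := ph (inr (i, true)); have := ph (inr (i, false)).
  rewrite /yc; case: (hpair i) => -> ? ?; rewrite ?subr0 ?sub0r ?normrN ?addr0 ?add0r ger0_norm //.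
have eD : Dn (Psi h) = (En h)^-1.
  rewrite /Dn.
  have -> : \sum_(v <- es) Psi h v = (\sum_(v <- es) gc h v) / En h.
    by rewrite mulr_suml; apply: eq_big_seq => v ves; rewrite /Psi (_ : v \in sigma = true).
  have -> : \sum_(i < n) `|xc (Psi h) i| =
            (\sum_(i < n) (h (inr (i, true)) + h (inr (i, false)))) / En h.
    rewrite mulr_suml; apply: eq_bigr => i _.
    by rewrite ex normrM normfV (gtr0_norm Ep) ay.
  have hE : En h = 1 - \sum_(i < n) (h (inr (i, true)) + h (inr (i, false))) + \sum_(v <- es) gc h v by [].
  move: E0; rewrite hE => E0'.
  by field.
apply: funext => -[v|[i b]]; rewrite /Phi eD invrK.
  case: (boolP (v \in sigma)) => vs; first by rewrite mul0r hsig.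
  by rewrite /Psi (negbTE vs) divfK.
have := ph (inr (i, true)); have := ph (inr (i, false)).
case: b; rewrite ex -?mulNr posp_scale // divfK // /yc;
  case: (hpair i) => -> ? ?; rewrite ?subr0 ?sub0r ?opprK ?opprB ?subr0.
- by rewrite posp_le0 // oppr_le0.
- by rewrite posp_ge0id.
- by rewrite posp_ge0id.
- by rewrite posp_le0 // oppr_le0.
Qed.

End Main2.

Section Main3.
Variables (R : realType) (V : choiceType) (K : set {fset V}) (sigma : {fset V}) (n : nat) (x0 : V).
Hypotheses (scK : simplicial_complex K) (Ks : K sigma) (card : #|` sigma| = n.+1).

Local Notation Phi := (@Phi R V sigma n x0).
Local Notation Dn := (@Dn R V sigma n x0).
Local Notation xc := (@xc R V sigma n x0).
Local Notation Psi := (@Psi R V sigma n).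
Local Notation gc := (@gc R V sigma n).
Local Notation En := (@En R V sigma n).
Local Notation mn := (@mn R V n).
Local Notation yc := (@yc R V n).
Local Notation es := (@es V sigma).

Lemma ctsAt_posp (W : choiceType) (s : {fset W}) (F : (W -> R) -> R) p :
  ctsAt s F p -> ctsAt s (fun q => posp (F q)) p.
Proof.
move=> cF; rewrite /posp; apply: ctsAt_mul; last exact: ctsAt_const.
by apply: ctsAt_add => //; apply: ctsAt_abs.
Qed.

Lemma ctsAt_Dn s p : supp_in s p -> ctsAt s Dn p.
Proof.
move=> sp; rewrite /Dn; apply: ctsAt_add.
  apply: ctsAt_add; first exact: ctsAt_const.
  by apply: ctsAt_opp; apply: ctsAt_sum => v; apply: ctsAt_coord.
apply: ctsAt_sum => i; apply: ctsAt_abs; rewrite /xc.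
by apply: ctsAt_add; [|apply: ctsAt_opp]; apply: ctsAt_coord.
Qed.

Lemma Phi_cont : continuous (fun p : realization R (link_union_star K sigma) =>
   exist _ (Phi (proj1_sig p)) (PhiP x0 scK card (proj2_sig p)) :
   realization R (suspension_n n (obstruction K sigma))).
Proof.
apply: (real_cont (susp_closed (obs_closed scK)) (Phi := Phi)) => // s Ks'.
exists ([fset inl v | v in s] `|` [fset inr p | p in enum {: 'I_n * bool}]); split.
  move=> q sq [v|p]; rewrite in_fsetU negb_or => /andP[h1 h2].
    rewrite /= sq ?mulr0 ?mul0r; first by case: (v \in sigma); rewrite mul0r.
    by apply: contra h1 => vs; apply/imfsetP; exists v.
  by exfalso; move: h2; apply/negP/negPn; apply/imfsetP; exists p; rewrite ?mem_enum.
move=> p sp w _.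
have [mu [Amu zf pf s1]] := proj2_sig p.
have [_ _ Dp] := A_facts x0 card Amu zf pf s1.
have D0 : Dn (proj1_sig p) != 0 by rewrite gt_eqF.
case: w => [v|[i b]]; rewrite /Phi /=; apply: ctsAt_mul; try (apply: ctsAt_inv => //; exact: ctsAt_Dn).
  by case: (v \in sigma); [apply: ctsAt_const | apply: ctsAt_coord].
apply: ctsAt_posp; rewrite /xc.
by case: b; [|apply: ctsAt_opp]; apply: ctsAt_add; [|apply: ctsAt_opp| |apply: ctsAt_opp]; apply: ctsAt_coord.
Qed.

Lemma ctsAt_mn (s : {fset V + ('I_n * bool)}) p : supp_in s p -> ctsAt s mn p.
Proof.
move=> sp; rewrite /mn; apply: ctsAt_bigmin => i; rewrite /yc.
by apply: ctsAt_add; [|apply: ctsAt_opp]; apply: ctsAt_coord.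
Qed.

Lemma ctsAt_gc (s : {fset V + ('I_n * bool)}) p v : supp_in s p -> ctsAt s (fun q => gc q v) p.
Proof.
move=> sp; rewrite /gc; case: (index v es) => [|k]; first by apply: ctsAt_opp; apply: ctsAt_mn.
apply: ctsAt_add; last by apply: ctsAt_opp; apply: ctsAt_mn.
case: insub => [i|]; last exact: ctsAt_const.
by rewrite /yc; apply: ctsAt_add; [|apply: ctsAt_opp]; apply: ctsAt_coord.
Qed.

Lemma ctsAt_En (s : {fset V + ('I_n * bool)}) p : supp_in s p -> ctsAt s En p.
Proof.
move=> sp; rewrite /En; apply: ctsAt_add.
  apply: ctsAt_add; first exact: ctsAt_const.
  by apply: ctsAt_opp; apply: ctsAt_sum => i; apply: ctsAt_add; apply: ctsAt_coord.
by apply: ctsAt_sum => v; apply: ctsAt_gc.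
Qed.

Lemma Psi_cont : continuous (fun p : realization R (suspension_n n (obstruction K sigma)) =>
   exist _ (Psi (proj1_sig p)) (PsiP x0 scK Ks card (proj2_sig p)) :
   realization R (link_union_star K sigma)).
Proof.
apply: (real_cont (lus_closed scK) (Phi := Psi)) => // s Ks'.
exists (ltrace s `|` sigma); split.
  move=> q sq v; rewrite in_fsetU negb_or ltraceE => /andP[h1 h2].
  by rewrite /Psi (negbTE h2) sq // mul0r.
move=> p sp w _.
have [Ep _ _ _] := S_facts x0 Ks card (proj2_sig p).
have E0 : En (proj1_sig p) != 0 by rewrite gt_eqF.
rewrite /Psi; apply: ctsAt_mul; last by apply: ctsAt_inv => //; exact: ctsAt_En.
by case: (w \in sigma); [apply: ctsAt_gc | apply: ctsAt_coord].
Qed.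
End Main3.

Theorem proposition6p1 (R : realType) (V : choiceType) (K : set {fset V})
  (sigma : {fset V}) (n : nat) :
  simplicial_complex K -> K sigma -> #|` sigma| = n.+1 ->
  homotopy_equivalent R
    (realization R (link_union_star K sigma))
    (realization R (suspension_n n (obstruction K sigma))).
Proof.
move=> scK Ks card.
have : (0 < #|` sigma|)%N by rewrite card.
rewrite cardfs_gt0 => /fset0Pn [x0 _].
exists (fun p : realization R (link_union_star K sigma) =>
   exist _ (Phi sigma x0 (proj1_sig p)) (PhiP x0 scK card (proj2_sig p)) :
   realization R (suspension_n n (obstruction K sigma))).
exists (fun p : realization R (suspension_n n (obstruction K sigma)) =>
   exist _ (Psi sigma (proj1_sig p)) (PsiP x0 scK Ks card (proj2_sig p)) :
   realization R (link_union_star K sigma)).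
split.
- exact: Phi_cont.
- exact: Psi_cont.
- exists (fun xt => xt.1); split => //.
    by move=> [x t]; apply: cvg_fst.
  move=> [h hp] /=; apply: eq_exist; by rewrite (PsiPhi x0 card hp).
- exists (fun xt => xt.1); split => //.
    by move=> [x t]; apply: cvg_fst.
  move=> [h hp] /=; apply: eq_exist; by rewrite (PhiPsi x0 Ks card hp).
Qed.
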